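(* Let $X$ be a random covariate vector with values in $\mathcal{X}$, $r\colon\mathcal{X}\to\{0,1\}$ a deterministic map, $A\in\{0,1\}$ and $S^\ast\in\{0,1\}$ random variables, and $Y^{a=0},Y^{a=1}$ integrable real-valued potential outcomes. Define $$A^\ast=S^\ast r(X)+(1-S^\ast)A,\quad Y^\ast=A^\ast Y^{a=1}+(1-A^\ast)Y^{a=0},$$ $$Y^{s=0}=AY^{a=1}+(1-A)Y^{a=0},\quad Y^{s=1}=r(X)Y^{a=1}+\{1-r(X)\}Y^{a=0}.$$ Assume $\{Y^{a=1},Y^{a=0}\}\perp\!\!\!\perp A\mid X$, $\{Y^{a=1},Y^{a=0}\}\perp\!\!\!\perp A^\ast\mid X$, $A\perp\!\!\!\perp S^\ast\mid X$, and $0<\pi(x)<1$, $0<\pi^\ast(x)<1$ for all $x\in\mathcal{X}$, where $\pi(x)=\mathbb{E}[A\mid X=x]$, $\pi^\ast(x)=\mathbb{E}[A^\ast\mid X=x]$. Let $\rho^\ast(x)=\mathbb{E}[S^\ast\mid X=x]$ and $\tau(x)=\mathbb{E}[Y^{a=1}-Y^{a=0}\mid X=x]$. Then the average implementation effect $\Lambda(r,\rho^\ast)=\mathbb{E}[Y^\ast-Y^{s=0}]$ and the maximal implementation gain $\Gamma(r,\rho^\ast)=\mathbb{E}[Y^{s=1}-Y^\ast]$ satisfy $$\Lambda(r,\rho^\ast)=\mathbb{E}\big[\{\pi^\ast(X)-\pi(X)\}\tau(X)\big]=\mathbb{E}\big[\rho^\ast(X)\{r(X)-\pi(X)\}\tau(X)\big],$$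 $$\Gamma(r,\rho^\ast)=\mathbb{E}\big[\{r(X)-\pi^\ast(X)\}\tau(X)\big]=\mathbb{E}\big[\{1-\rho^\ast(X)\}\{r(X)-\pi(X)\}\tau(X)\big].$$
   Context: This is the ''new ITR'' setting: $A$ is the treatment under usual care without the rule; $S^\ast$ indicates a (future) stochastic implementation of the rule $r$ with implementation function $\rho^\ast$; $A^\ast$ and $Y^\ast$ are the treatment and outcome under that partial implementation; $Y^{s=1}$ is the outcome if the rule were always followed and $Y^{s=0}$ the outcome under usual care. *)

(* Defs.v *)
From HB Require Import structures.
From mathcomp Require Import all_boot all_order all_algebra.
From mathcomp Require Import all_classical all_reals all_analysis.
Set Implicit Arguments. Unset Strict Implicit. Unset Printing Implicit Defensive.
Import Order.TTheory GRing.Theory Num.Theory.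
Local Open Scope classical_set_scope.
Local Open Scope ring_scope.

Section Defs.
Context (R : realType) (d : measure_display) (Omega : measurableType d)
  (P : probability Omega R) (dX : measure_display) (Xs : measurableType dX)
  (X : Omega -> Xs).

Definition cond_exp_version (Z : Omega -> R) (g : Xs -> R) : Prop :=
  measurable_fun setT g /\
  P.-integrable setT (EFin \o (g \o X)) /\
  forall D : set Xs, measurable D ->
    (\int[P]_(w in X @^-1` D) (Z w)%:E = \int[P]_(w in X @^-1` D) (g (X w))%:E)%E.

Definition cond_indep (d1 d2 : measure_display) (T1 : measurableType d1)
  (T2 : measurableType d2) (U : Omega -> T1) (V : Omega -> T2) : Prop :=
  forall (B : set T1) (C : set T2), measurable B -> measurable C ->
    exists gU gV : Xs -> R,
      cond_exp_version (\1_(U @^-1` B)) gU /\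
      cond_exp_version (\1_(V @^-1` C)) gV /\
      forall D : set Xs, measurable D ->
        P (U @^-1` B `&` V @^-1` C `&` X @^-1` D) =
        (\int[P]_(w in X @^-1` D) (gU (X w) * gV (X w))%:E)%E.
End Defs.

Definition Astar (R : realType) (Omega Xs : Type) (X : Omega -> Xs)
  (r : Xs -> R) (S A : Omega -> R) : Omega -> R :=
  fun w => S w * r (X w) + (1 - S w) * A w.

Definition outcome (R : realType) (Omega : Type) (T Y1 Y0 : Omega -> R)
  : Omega -> R :=
  fun w => T w * Y1 w + (1 - T w) * Y0 w.

(* Main.v *)
Require Import Defs.
From HB Require Import structures.
From mathcomp Require Import all_boot all_order all_algebra.
From mathcomp Require Import all_classical all_reals all_analysis.
From mathcomp Require Import measurable_realfun.
From mathcomp Require Import ring.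
Set Implicit Arguments. Unset Strict Implicit. Unset Printing Implicit Defensive.
Import Order.TTheory GRing.Theory Num.Theory.
Import numFieldNormedType.Exports.
Import HBNNSimple.
Local Open Scope classical_set_scope.
Local Open Scope ring_scope.

Section GL.
Context (R : realType) (d : measure_display) (Omega : measurableType d)
  (P : probability Omega R) (d' : measure_display) (T' : measurableType d')
  (V : Omega -> T').
Hypothesis mV : measurable_fun setT V.

Lemma mpre B : measurable B -> measurable (V @^-1` B).
Proof. by move=> mB; have := mV measurableT mB; rewrite setTI. Qed.

Lemma indic_int (H : Omega -> R) B : measurable B ->
  (\int[P]_w (\1_B (V w) * H w)%:E = \int[P]_(w in V @^-1` B) (H w)%:E)%E.
Proof.
move=> mB; rewrite [RHS]integral_mkcond; apply: eq_integral => w _.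
rewrite /patch indicE; case: (boolP (V w \in B)) => h.
  by rewrite mem_set ?mul1r //; exact: set_mem h.
rewrite memNset ?mul0r // => Vw; by rewrite mem_set in h.
Qed.

Lemma int_bdd (h H : Omega -> R) M : measurable_fun setT h ->
  (forall w, `|h w| <= M) -> P.-integrable setT (EFin \o H) ->
  P.-integrable setT (fun w => (h w * H w)%:E).
Proof.
move=> mh hM iH.
have hb : [bounded h x | x in setT].
  exists M; split; first exact: num_real.
  by move=> x Mx w _; exact: le_trans (hM w) (ltW Mx).
have := integrableMr measurableT mh hb iH; apply: eq_integrable => //= w _.
Qed.

Variables F G : Omega -> R.
Hypothesis mF : measurable_fun setT F.
Hypothesis mG : measurable_fun setT G.
Hypothesis iF : P.-integrable setT (EFin \o F).
Hypothesis iG : P.-integrable setT (EFin \o G).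
Hypothesis HFG : forall B, measurable B ->
  (\int[P]_(w in V @^-1` B) (F w)%:E = \int[P]_(w in V @^-1` B) (G w)%:E)%E.

Lemma GL_indic B : measurable B ->
  (\int[P]_w (\1_B (V w) * F w)%:E = \int[P]_w (\1_B (V w) * G w)%:E)%E.
Proof. by move=> mB; rewrite !indic_int // HFG. Qed.

Lemma GL_sfun (s : {nnsfun T' >-> R}) :
  (\int[P]_w (s (V w) * F w)%:E = \int[P]_w (s (V w) * G w)%:E)%E.
Proof.
have E H w : (s (V w) * H w)%:E = (\sum_(y <- finmap.enum_fset (fset_set (range s)))
    (y%:E * (\1_(s @^-1` [set y]) (V w) * H w)%:E))%E.
  rewrite fimfunE fsbig_finite; last exact: fimfunP.
  rewrite big_distrl /= sumEFin; congr (_%:E); apply: eq_bigr => y _.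
  by rewrite mulrA.
have mI y : measurable (s @^-1` [set y]) by exact: measurable_funPTI.
have iI H y : P.-integrable setT (EFin \o H) ->
    P.-integrable setT (fun w => (y%:E * (\1_(s @^-1` [set y]) (V w) * H w)%:E)%E).
  move=> iH; apply: integrableZl => //; apply: (@int_bdd _ _ 1) => //.
    apply: measurableT_comp mV; exact: measurable_indic.
  by move=> w; rewrite indicE; case: (_ \in _); rewrite ?normr1 ?normr0.
under eq_integral do rewrite E.
under [RHS]eq_integral do rewrite E.
rewrite integral_sum //; last by move=> y; exact: iI.
rewrite integral_sum //; last by move=> y; exact: iI.
apply: eq_bigr => y _; rewrite integralZl //; last first.
  by apply: (@int_bdd _ _ 1) => //; [apply: measurableT_comp mV; exact: measurable_indic|
    by move=> w; rewrite indicE; case: (_ \in _); rewrite ?normr1 ?normr0].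
rewrite integralZl //; last first.
  by apply: (@int_bdd _ _ 1) => //; [apply: measurableT_comp mV; exact: measurable_indic|
    by move=> w; rewrite indicE; case: (_ \in _); rewrite ?normr1 ?normr0].
by rewrite GL_indic.
Qed.

Section pos.
Variable phi : T' -> R.
Hypothesis mphi : measurable_fun setT phi.
Hypothesis phi0 : forall x, 0 <= phi x.

Let mEphi : measurable_fun setT (EFin \o phi).
Proof. exact/measurable_EFinP. Qed.
Let sa := nnsfun_approx measurableT mEphi.

Let sa_ge0 n x : 0 <= sa n x.
Proof. exact: fun_ge0. Qed.

Let sa_le n x : sa n x <= phi x.
Proof.
rewrite /sa (nnsfun_approxE measurableT mEphi n) -lee_fin.
by apply: (le_approx n (f := EFin \o phi)) => // y _; rewrite lee_fin.
Qed.

Let sa_cvg x : sa n x @[n --> \oo] --> phi x.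
Proof.
have -> : (fun n => sa n x) = (fun n => approx setT (EFin \o phi) n x).
  by apply/funext => n; rewrite /sa (nnsfun_approxE measurableT mEphi n).
have := cvg_approx (f := EFin \o phi) (x := x) (D := setT) _ Logic.I (ltry _).
by apply => y _; rewrite lee_fin.
Qed.

Lemma GL_dcvg (H : Omega -> R) : measurable_fun setT H ->
  P.-integrable setT (fun w => (phi (V w) * H w)%:E) ->
  (\int[P]_w (sa n (V w) * H w)%:E)%E @[n --> \oo] -->
  (\int[P]_w (phi (V w) * H w)%:E)%E.
Proof.
move=> mH iH.
apply: (@dominated_cvg _ _ _ P setT measurableT _ _ (fun w => (`|phi (V w) * H w|)%:E)) => //.
- move=> n; apply/measurable_EFinP; apply: measurable_funM => //.
  by apply: measurableT_comp mV; exact: measurable_funP.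
- move=> w _; apply: cvg_EFin; first exact: nearW.
  by apply: cvgMl; exact: sa_cvg.
- have := integrable_abse iH; apply: eq_integrable => //= w _.
- move=> n w _; rewrite /= lee_fin !normrM ler_wpM2r //.
  by rewrite !ger0_norm // ?sa_le // (le_trans (sa_ge0 n (V w))) ?sa_le.
Qed.

Lemma GL_pos : P.-integrable setT (fun w => (phi (V w) * F w)%:E) ->
  P.-integrable setT (fun w => (phi (V w) * G w)%:E) ->
  (\int[P]_w (phi (V w) * F w)%:E = \int[P]_w (phi (V w) * G w)%:E)%E.
Proof.
move=> iPF iPG.
have cF := GL_dcvg mF iPF; have cG := GL_dcvg mG iPG.
have E : (fun n => \int[P]_w (sa n (V w) * F w)%:E)%E =
    (fun n => \int[P]_w (sa n (V w) * G w)%:E)%E.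
  by apply/funext => n; exact: GL_sfun.
rewrite E in cF; exact: (cvg_unique _ cF cG).
Qed.
End pos.

Lemma GL (phi : T' -> R) : measurable_fun setT phi ->
  P.-integrable setT (fun w => (phi (V w) * F w)%:E) ->
  P.-integrable setT (fun w => (phi (V w) * G w)%:E) ->
  (\int[P]_w (phi (V w) * F w)%:E = \int[P]_w (phi (V w) * G w)%:E)%E.
Proof.
move=> mphi iPF iPG.
have ip (psi : T' -> R) H : measurable_fun setT psi -> measurable_fun setT H ->
    (forall x, `|psi x| <= `|phi x|) ->
    P.-integrable setT (fun w => (phi (V w) * H w)%:E) ->
    P.-integrable setT (fun w => (psi (V w) * H w)%:E).
  move=> mpsi mH hpsi iH; apply: le_integrable iH => //.
    apply/measurable_EFinP; apply: measurable_funM => //.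
    exact: measurableT_comp mpsi mV.
  by move=> w _ /=; rewrite lee_fin !normrM ler_wpM2r.
have hp x : `|phi^\+ x| <= `|phi x|.
  by rewrite /funrpos; case: (leP (phi x) 0) => h; rewrite ?normr0.
have hn x : `|phi^\- x| <= `|phi x|.
  by rewrite /funrneg; case: (leP (- phi x) 0) => h; rewrite ?normr0 ?normrN.
have mp := measurable_funrpos mphi; have mn := measurable_funrneg mphi.
have E H w : (phi (V w) * H w)%:E =
    ((phi^\+ (V w) * H w)%:E - (phi^\- (V w) * H w)%:E)%E.
  by rewrite -EFinB -mulrBl {1}(_ : phi (V w) = (phi^\+ - phi^\-) (V w))
    // funrposBneg.
under eq_integral do rewrite E.
under [RHS]eq_integral do rewrite E.
rewrite (integralB_EFin _ _ (f1 := fun w => phi^\+ (V w) * F w)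
                           (f2 := fun w => phi^\- (V w) * F w)) //;
  [|exact: ip|exact: ip].
rewrite (integralB_EFin _ _ (f1 := fun w => phi^\+ (V w) * G w)
                           (f2 := fun w => phi^\- (V w) * G w)) //;
  [|exact: ip|exact: ip].
rewrite (@GL_pos phi^\+) //; try exact: ip.
by rewrite (@GL_pos phi^\-) //; exact: ip.
Qed.

End GL.

Section Main.
Context (R : realType) (d : measure_display) (Omega : measurableType d)
  (P : probability Omega R) (dX : measure_display) (Xs : measurableType dX)
  (X : Omega -> Xs).
Hypothesis mX : measurable_fun setT X.

Lemma version_unique Z g1 g2 : cond_exp_version P X Z g1 ->
  cond_exp_version P X Z g2 -> {ae P, forall w, g1 (X w) = g2 (X w)}.
Proof.
move=> [m1 [i1 H1]] [m2 [i2 H2]].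
pose h x := g1 x - g2 x.
have mh : measurable_fun setT h by apply: measurable_funB.
pose A := h @^-1` [set` `[0%R, +oo[%R].
have mA : measurable A.
  by rewrite -[A]setTI; apply: mh => //; exact: measurable_itv.
pose phi x : R := \1_A x - \1_(~` A) x.
have mphi : measurable_fun setT phi.
  by apply: measurable_funB; apply: measurable_indic => //; exact: measurableC.
have bphi w : `|phi (X w)| <= 1.
  rewrite /phi !indicE; case: (boolP (X w \in A)) => hA.
    by rewrite memNset ?subr0 ?normr1 // => /(_ (set_mem hA)).
  rewrite mem_set ?sub0r ?normrN ?normr1 // => hA'; move: hA.
  by rewrite mem_set.
have ip g : P.-integrable setT (EFin \o (g \o X)) ->
    P.-integrable setT (fun w => (phi (X w) * g (X w))%:E).
  by move=> ig; apply: (@int_bdd _ _ _ _ (phi \o X) (g \o X) 1) => //;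
    exact: measurableT_comp mphi mX.
have key := GL mX (F := g1 \o X) (G := g2 \o X)
  (measurableT_comp m1 mX) (measurableT_comp m2 mX) i1 i2
  (fun B mB => etrans (esym (H1 B mB)) (H2 B mB)) mphi (ip _ i1) (ip _ i2).
have I0 : (\int[P]_w `|(h (X w))%:E| = 0)%E.
  transitivity (\int[P]_w ((phi (X w) * g1 (X w))%:E
                         - (phi (X w) * g2 (X w))%:E))%E.
    apply: eq_integral => w _; rewrite -EFinB -mulrBr /=; congr (_%:E).
    rewrite /phi !indicE; case: (boolP (X w \in A)) => hA.
      rewrite memNset ?subr0 ?mul1r; last by move=> /(_ (set_mem hA)).
      by rewrite ger0_norm //; have := set_mem hA; rewrite /A /= in_itv /= andbT.
    rewrite mem_set ?sub0r ?mulN1r; last by move=> hA'; move: hA; rewrite mem_set.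
    rewrite ler0_norm ?opprK // ltW //.
    have : ~ (0 <= h (X w)).
      by move=> h0; move/negP: hA; apply; apply/mem_set; rewrite /A /= in_itv /= h0.
    by move/negP; rewrite -ltNge.
  rewrite integralB_EFin //; [|exact: ip|exact: ip].
  by rewrite key subee // integrable_fin_num //; exact: ip.
have mhX : measurable_fun setT (fun w => (h (X w))%:E).
  by apply/measurable_EFinP; exact: measurableT_comp mh mX.
have := (ae_eq_integral_abs P measurableT mhX).1 I0.
apply: filterS => w /= /(_ Logic.I) [] /eqP.
by rewrite subr_eq0 => /eqP.
Qed.

Lemma vD Z1 Z2 g1 g2 : P.-integrable setT (EFin \o Z1) ->
  P.-integrable setT (EFin \o Z2) ->
  cond_exp_version P X Z1 g1 -> cond_exp_version P X Z2 g2 ->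
  cond_exp_version P X (fun w => Z1 w + Z2 w) (fun x => g1 x + g2 x).
Proof.
move=> i1 i2 [m1 [j1 H1]] [m2 [j2 H2]]; split; first exact: measurable_funD.
split.
  have := integrableD measurableT j1 j2.
  by apply: eq_integrable => // w _ /=; rewrite EFinD.
move=> D mD; have mXD := mpre mX mD.
have sub (f : Omega -> \bar R) : P.-integrable setT f ->
    P.-integrable (X @^-1` D) f.
  by move=> hf; apply: integrableS hf.
under eq_integral do rewrite EFinD.
under [RHS]eq_integral do rewrite EFinD.
rewrite integralD //; [|exact: sub|exact: sub].
rewrite integralD //; [|exact: (sub _ j1)|exact: (sub _ j2)].
by rewrite H1 // H2.
Qed.

Lemma vB Z1 Z2 g1 g2 : P.-integrable setT (EFin \o Z1) ->
  P.-integrable setT (EFin \o Z2) ->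
  cond_exp_version P X Z1 g1 -> cond_exp_version P X Z2 g2 ->
  cond_exp_version P X (fun w => Z1 w - Z2 w) (fun x => g1 x - g2 x).
Proof.
move=> i1 i2 [m1 [j1 H1]] [m2 [j2 H2]]; split; first exact: measurable_funB.
split.
  have := integrableB measurableT j1 j2.
  by apply: eq_integrable => // w _ /=; rewrite EFinB.
move=> D mD; have mXD := mpre mX mD.
have sub (f : Omega -> \bar R) : P.-integrable setT f ->
    P.-integrable (X @^-1` D) f.
  by move=> hf; apply: integrableS hf.
rewrite integralB_EFin //; [|exact: sub|exact: sub].
rewrite integralB_EFin //; [|exact: (sub _ j1)|exact: (sub _ j2)].
by rewrite H1 // H2.
Qed.

Lemma vext Z1 Z2 g : (forall w, Z1 w = Z2 w) ->
  cond_exp_version P X Z1 g -> cond_exp_version P X Z2 g.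
Proof. by move=> e; rewrite (_ : Z1 = Z2) //; apply/funext. Qed.

Lemma bdd01 (f : Omega -> R) : (forall w, f w = 0 \/ f w = 1) ->
  forall w, `|f w| <= 1.
Proof. by move=> hf w; case: (hf w) => ->; rewrite ?normr0 ?normr1. Qed.

Lemma bdd_open (f : Xs -> R) : (forall x, 0 < f x < 1) ->
  forall x, `|f x| <= 1.
Proof.
by move=> hf x; have /andP[h0 h1] := hf x; rewrite ger0_norm ?ltW.
Qed.

Lemma int01 (T : Omega -> R) : measurable_fun setT T ->
  (forall w, T w = 0 \/ T w = 1) -> P.-integrable setT (EFin \o T).
Proof.
move=> mT T01; have := @int_bdd _ _ _ P T (cst 1) 1 mT (bdd01 T01)
  (finite_measure_integrable_cst P 1 measurableT).
by apply: eq_integrable => // w _ /=; rewrite mulr1.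
Qed.

Lemma vSr (S : Omega -> R) rho (r : Xs -> R) :
  measurable_fun setT S -> (forall w, S w = 0 \/ S w = 1) ->
  measurable_fun setT r -> (forall x, r x = 0 \/ r x = 1) ->
  cond_exp_version P X S rho ->
  cond_exp_version P X (fun w => S w * r (X w)) (fun x => rho x * r x).
Proof.
move=> mS S01 mr r01 [mrho [irho Hrho]].
have br x : `|r x| <= 1 by case: (r01 x) => ->; rewrite ?normr0 ?normr1.
have mrX : measurable_fun setT (r \o X) by exact: measurableT_comp mr mX.
split; first exact: measurable_funM.
split.
  have := @int_bdd _ _ _ P (r \o X) _ 1 mrX (fun w => br (X w)) irho.
  by apply: eq_integrable => // w _ /=; rewrite mulrC.
move=> D mD.
pose phi x := \1_D x * r x.
have mphi : measurable_fun setT phi.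
  by apply: measurable_funM => //; exact: measurable_indic.
have bphi x : `|phi x| <= 1.
  rewrite /phi normrM -[1]mulr1 ler_pM //.
  by rewrite indicE; case: (_ \in _); rewrite ?normr0 ?normr1.
have mphiX : measurable_fun setT (phi \o X) by exact: measurableT_comp mphi mX.
rewrite -!indic_int //.
transitivity (\int[P]_w (phi (X w) * S w)%:E)%E.
  by apply: eq_integral => w _; rewrite /phi -mulrA [r (X w) * _]mulrC.
transitivity (\int[P]_w (phi (X w) * rho (X w))%:E)%E; last first.
  by apply: eq_integral => w _; rewrite /phi -mulrA [r (X w) * _]mulrC.
apply: (@GL _ _ _ P _ _ X mX S (rho \o X) _ _ _ _ _ phi) => //.
all: try exact: measurableT_comp mrho mX.
all: try exact: int01.
- by apply: (@int_bdd _ _ _ P (phi \o X) _ 1 mphiX (fun w => bphi (X w))); exact: int01.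
- exact: (@int_bdd _ _ _ P (phi \o X) _ 1 mphiX (fun w => bphi (X w))).
Qed.

Lemma ind01 (T : Omega -> R) : (forall w, T w = 0 \/ T w = 1) ->
  \1_(T @^-1` [set 1]) = T.
Proof.
move=> T01; apply/funext => w; rewrite indicE; case: (T01 w) => h; rewrite h.
  rewrite memNset // => /= h1; move: h1; rewrite h => /eqP.
  by rewrite eq_sym oner_eq0.
by rewrite mem_set.
Qed.

Lemma vSA (A S : Omega -> R) pA rho :
  measurable_fun setT A -> (forall w, A w = 0 \/ A w = 1) ->
  measurable_fun setT S -> (forall w, S w = 0 \/ S w = 1) ->
  cond_indep P X A S ->
  cond_exp_version P X A pA -> (forall x, 0 < pA x < 1) ->
  cond_exp_version P X S rho ->
  cond_exp_version P X (fun w => S w * A w) (fun x => rho x * pA x).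
Proof.
move=> mA A01 mS S01 cI vA pA01 vS.
have [mpA [ipA HpA]] := vA; have [mrho [irho Hrho]] := vS.
have bpA := bdd_open pA01.
have mpAX : measurable_fun setT (pA \o X) by exact: measurableT_comp mpA mX.
split; first exact: measurable_funM.
split.
  have := @int_bdd _ _ _ P (pA \o X) _ 1 mpAX (fun w => bpA (X w)) irho.
  by apply: eq_integrable => // w _ /=; rewrite mulrC.
move=> D mD; have mXD := mpre mX mD.
have [gA [gS [vgA [vgS HV]]]] := cI [set 1] [set 1] (measurable_set1 _)
  (measurable_set1 _).
rewrite ind01 // in vgA; rewrite ind01 // in vgS.
have aeA := version_unique vgA vA; have aeS := version_unique vgS vS.
have [mgA _] := vgA; have [mgS _] := vgS.
have mA1 : measurable (A @^-1` [set 1]).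
  by rewrite -[_ @^-1` _]setTI; apply: mA => //; exact: measurable_set1.
have mS1 : measurable (S @^-1` [set 1]).
  by rewrite -[_ @^-1` _]setTI; apply: mS => //; exact: measurable_set1.
transitivity (\int[P]_(w in X @^-1` D)
    (\1_(A @^-1` [set 1] `&` S @^-1` [set 1]) w)%:E)%E.
  apply: eq_integral => w _; rewrite indicI (ind01 A01) (ind01 S01).
  by rewrite mulrC.
rewrite integral_indic //; last exact: measurableI.
apply: eq_trans (HV D mD) _.
apply: ae_eq_integral => //.
- apply/measurable_EFinP; apply: measurable_funM.
    exact: measurable_funS (measurableT_comp mgA mX).
  exact: measurable_funS (measurableT_comp mgS mX).
- apply/measurable_EFinP; apply: measurable_funM.
    exact: measurable_funS (measurableT_comp mrho mX).
  exact: measurable_funS (measurableT_comp mpA mX).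
- apply: filterS2 aeA aeS => w -> -> _.
  by rewrite mulrC.
Qed.

Variables Y1 Y0 : Omega -> R.
Hypotheses (mY1 : measurable_fun setT Y1) (mY0 : measurable_fun setT Y0).
Hypotheses (iY1 : P.-integrable setT (EFin \o Y1))
           (iY0 : P.-integrable setT (EFin \o Y0)).

Local Notation U := (fun w => (Y1 w, Y0 w)).
Let mU : measurable_fun setT U.
Proof. exact: measurable_fun_pair. Qed.

Let mYd : measurable_fun setT (fun w => Y1 w - Y0 w).
Proof. exact: measurable_funB. Qed.

Let iYd : P.-integrable setT (EFin \o (fun w => Y1 w - Y0 w)).
Proof.
have := integrableB measurableT iY1 iY0.
by apply: eq_integrable => // w _ /=; rewrite EFinB.
Qed.

Lemma KEY (T : Omega -> R) pT tau :
  measurable_fun setT T -> (forall w, T w = 0 \/ T w = 1) ->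
  cond_indep P X (fun w => (Y1 w, Y0 w)) T ->
  cond_exp_version P X T pT -> (forall x, 0 < pT x < 1) ->
  cond_exp_version P X (fun w => Y1 w - Y0 w) tau ->
  (\int[P]_w (T w * (Y1 w - Y0 w))%:E = \int[P]_w (pT (X w) * tau (X w))%:E)%E.
Proof.
move=> mT T01 cI vT pT01 vtau.
have bT := bdd01 T01; have bpT := bdd_open pT01.
have [mpT [ipT HpT]] := vT.
have [mtau [itau Htau]] := vtau.
have mpTX : measurable_fun setT (pT \o X) by exact: measurableT_comp mpT mX.
have step1 B : measurable B ->
    (\int[P]_(w in U @^-1` B) (T w)%:E = \int[P]_(w in U @^-1` B) (pT (X w))%:E)%E.
  move=> mB.
  have [gU [gV [[mgU [igU HgU]] [vV HV]]]] := cI B [set 1] mB (measurable_set1 _).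
  have eT : \1_(T @^-1` [set 1]) = T.
    apply/funext => w; rewrite indicE; case: (T01 w) => h; rewrite h.
      rewrite memNset // => /= h1; move: h1; rewrite h => /eqP.
      by rewrite eq_sym oner_eq0.
    by rewrite mem_set.
  rewrite eT in vV.
  have ae := version_unique vV vT.
  have [mgV _] := vV.
  have mT1 : measurable (T @^-1` [set 1]).
    by rewrite -[_ @^-1` _]setTI; apply: mT => //; exact: measurable_set1.
  have mUB : measurable (U @^-1` B) by exact: mpre.
  rewrite -indic_int // -eT.
  rewrite (eq_integral (fun w => (\1_(U @^-1` B `&` T @^-1` [set 1]) w)%:E));
    last by move=> w _; rewrite indicI.
  rewrite integral_indic //; last exact: measurableI.
  rewrite -(preimage_setT X); apply: eq_trans (HV setT measurableT) _.
  rewrite preimage_setT.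
  transitivity (\int[P]_w (pT (X w) * gU (X w))%:E)%E.
    apply: ae_eq_integral => //.
    - apply/measurable_EFinP; apply: measurable_funM => //.
        exact: measurableT_comp mgU mX.
      exact: measurableT_comp mgV mX.
    - apply/measurable_EFinP; apply: measurable_funM => //.
      exact: measurableT_comp mgU mX.
    - by apply: filterS ae => w /= -> _; rewrite mulrC.
  rewrite -indic_int //; apply: esym.
  transitivity (\int[P]_w (pT (X w) * \1_(U @^-1` B) w)%:E)%E.
    by apply: eq_integral => w _; rewrite mulrC.
  apply: (@GL _ _ _ P _ _ X mX (\1_(U @^-1` B)) (gU \o X) _ _ _ _ _ pT) => //.
  all: try (exact: measurableT_comp mgU mX).
  - exact: integrable_indic.
  - apply: (@int_bdd _ _ _ _ (pT \o X) _ 1) => //; last exact: integrable_indic.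
    by move=> w; exact: bpT.
  - by apply: (@int_bdd _ _ _ _ (pT \o X) (gU \o X) 1) => // w; exact: bpT.
have iT : P.-integrable setT (EFin \o T).
  have := @int_bdd _ _ _ P T (cst 1) 1 mT bT
    (finite_measure_integrable_cst P 1 measurableT).
  by apply: eq_integrable => // w _ /=; rewrite mulr1.
have iYdh (h : Omega -> R) : measurable_fun setT h -> (forall w, `|h w| <= 1) ->
    P.-integrable setT (fun w => ((Y1 w - Y0 w) * h w)%:E).
  move=> mh bh; have := @int_bdd _ _ _ P h _ 1 mh bh iYd.
  by apply: eq_integrable => // w _ /=; rewrite mulrC.
have mphi : measurable_fun setT (fun u : R * R => u.1 - u.2).
  by apply: measurable_funB; [exact: measurable_fst|exact: measurable_snd].
have step2 := @GL _ _ _ P _ _ U mU T (pT \o X) mT mpTX iT ipT step1 _ mphi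
  (iYdh _ mT bT) (iYdh _ mpTX (fun w => bpT (X w))).
have step3 := @GL _ _ _ P _ _ X mX (fun w => Y1 w - Y0 w) (tau \o X) mYd
  (measurableT_comp mtau mX) iYd itau Htau pT mpT
  (@int_bdd _ _ _ P (pT \o X) _ 1 mpTX (fun w => bpT (X w)) iYd)
  (@int_bdd _ _ _ P (pT \o X) _ 1 mpTX (fun w => bpT (X w)) itau).
transitivity (\int[P]_w ((Y1 w - Y0 w) * T w)%:E)%E.
  by apply: eq_integral => w _; rewrite mulrC.
rewrite step2 -step3; apply: eq_integral => w _ /=; by rewrite mulrC.
Qed.

Lemma ibdd (f : Omega -> R) M : measurable_fun setT f ->
  (forall w, `|f w| <= M) -> P.-integrable setT (EFin \o f).
Proof.
move=> mf bf; have := @int_bdd _ _ _ P f (cst 1) M mf bf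
  (finite_measure_integrable_cst P 1 measurableT).
by apply: eq_integrable => // w _ /=; rewrite mulr1.
Qed.

Lemma main_sec (r : Xs -> R) (A S : Omega -> R)
  (pi pistar rhostar tau : Xs -> R) :
  measurable_fun setT r -> (forall x, r x = 0 \/ r x = 1) ->
  measurable_fun setT A -> (forall w, A w = 0 \/ A w = 1) ->
  measurable_fun setT S -> (forall w, S w = 0 \/ S w = 1) ->
  cond_indep P X (fun w => (Y1 w, Y0 w)) A ->
  cond_indep P X (fun w => (Y1 w, Y0 w)) (Astar X r S A) ->
  cond_indep P X A S ->
  cond_exp_version P X A pi ->
  cond_exp_version P X (Astar X r S A) pistar ->
  cond_exp_version P X S rhostar ->
  cond_exp_version P X (fun w => Y1 w - Y0 w) tau ->
  (forall x, 0 < pi x < 1) ->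
  (forall x, 0 < pistar x < 1) ->
  let Ystar := outcome (Astar X r S A) Y1 Y0 in
  let Ys0 := outcome A Y1 Y0 in
  let Ys1 := outcome (fun w => r (X w)) Y1 Y0 in
  [/\ (\int[P]_w (Ystar w - Ys0 w)%:E
        = \int[P]_w ((pistar (X w) - pi (X w)) * tau (X w))%:E)%E,
      (\int[P]_w ((pistar (X w) - pi (X w)) * tau (X w))%:E
        = \int[P]_w (rhostar (X w) * (r (X w) - pi (X w)) * tau (X w))%:E)%E,
      (\int[P]_w (Ys1 w - Ystar w)%:E
        = \int[P]_w ((r (X w) - pistar (X w)) * tau (X w))%:E)%E &
      (\int[P]_w ((r (X w) - pistar (X w)) * tau (X w))%:E
        = \int[P]_w ((1 - rhostar (X w)) * (r (X w) - pi (X w)) * tau (X w))%:E)%E].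
Proof.
move=> mr r01 mA A01 mS S01 cIA cIAs cIAS vA vAs vS vtau pi01 ps01 Ystar Ys0 Ys1.
set As := Astar X r S A.
have As01 w : As w = 0 \/ As w = 1.
  rewrite /As /Astar; case: (S01 w) => ->; case: (r01 (X w)) => ->;
    case: (A01 w) => ->; rewrite ?(mul0r, mul1r, subr0, subrr, add0r, addr0);
    by [left|right].
have mrX : measurable_fun setT (r \o X) by exact: measurableT_comp mr mX.
have br : forall w, `|(r \o X) w| <= 1 by move=> w /=; case: (r01 (X w)) => ->;
  rewrite ?normr0 ?normr1.
have mAs : measurable_fun setT As.
  apply: measurable_funD; apply: measurable_funM => //.
  by apply: measurable_funB => //; exact: measurable_cst.
have [mpi [ipi _]] := vA; have [mps [ips _]] := vAs.
have [mrho [irho _]] := vS; have [mtau [itau Htau]] := vtau.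
have mpiX : measurable_fun setT (pi \o X) by exact: measurableT_comp mpi mX.
have mpsX : measurable_fun setT (pistar \o X) by exact: measurableT_comp mps mX.
have mrhoX : measurable_fun setT (rhostar \o X) by exact: measurableT_comp mrho mX.
have mtauX : measurable_fun setT (tau \o X) by exact: measurableT_comp mtau mX.
have bpi w : `|(pi \o X) w| <= 1 by exact: bdd_open.
have bps w : `|(pistar \o X) w| <= 1 by exact: bdd_open.
have kA := KEY mA A01 cIA vA pi01 vtau.
have kAs := KEY mAs As01 cIAs vAs ps01 vtau.
have iYh (h : Omega -> R) : measurable_fun setT h -> (forall w, `|h w| <= 1) ->
    P.-integrable setT (fun w => (h w * (Y1 w - Y0 w))%:E).
  by move=> mh bh; exact: (@int_bdd _ _ _ P h _ 1 mh bh iYd).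
have iTh (h : Omega -> R) : measurable_fun setT h -> (forall w, `|h w| <= 1) ->
    P.-integrable setT (fun w => (h w * tau (X w))%:E).
  by move=> mh bh; exact: (@int_bdd _ _ _ P h _ 1 mh bh itau).
pose q x := rhostar x * r x + pi x - rhostar x * pi x.
have vq : cond_exp_version P X As q.
  apply: (@vext (fun w => S w * r (X w) + A w - S w * A w)).
    by move=> w; rewrite /As /Astar; ring.
  apply: vB.
  - apply: (@ibdd _ 2).
      by apply: measurable_funD => //; exact: measurable_funM.
    move=> w; rewrite (le_trans (ler_normD _ _)) // -[2]/(1 + 1) lerD //.
      by rewrite normrM; case: (S01 w) => ->; case: (r01 (X w)) => ->;
        rewrite ?normr0 ?normr1 ?mul0r ?mul1r.
    by case: (A01 w) => ->; rewrite ?normr0 ?normr1.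
  - apply: (@ibdd _ 1); first exact: measurable_funM.
    by move=> w; rewrite normrM; case: (S01 w) => ->; case: (A01 w) => ->;
        rewrite ?normr0 ?normr1 ?mul0r ?mul1r.
  - apply: vD.
    + apply: (@ibdd _ 1); first exact: measurable_funM.
      by move=> w; rewrite normrM; case: (S01 w) => ->; case: (r01 (X w)) => ->;
        rewrite ?normr0 ?normr1 ?mul0r ?mul1r.
    + exact: int01.
    + exact: vSr.
    + exact: vA.
  - exact: vSA.
have aeq := version_unique vAs vq.
have mq : measurable_fun setT (q \o X).
  apply: measurableT_comp mX; apply: measurable_funB.
    by apply: measurable_funD => //; exact: measurable_funM.
  exact: measurable_funM.
have kr : (\int[P]_w (r (X w) * (Y1 w - Y0 w))%:E
           = \int[P]_w (r (X w) * tau (X w))%:E)%E.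
  apply: (@GL _ _ _ P _ _ X mX (fun w => Y1 w - Y0 w) (tau \o X) mYd mtauX
    iYd itau Htau r mr).
    by apply: iYh.
  by apply: iTh.
split.
- transitivity (\int[P]_w ((As w * (Y1 w - Y0 w))%:E
                          - (A w * (Y1 w - Y0 w))%:E))%E.
    apply: eq_integral => w _; rewrite -EFinB /Ystar /Ys0 /outcome -/As.
    by congr (_%:E); ring.
  rewrite integralB_EFin //; [|exact: iYh (bdd01 As01)|exact: iYh (bdd01 A01)].
  rewrite kA kAs -integralB_EFin //; [|exact: iTh|exact: iTh].
  by apply: eq_integral => w _; rewrite -EFinB mulrBl.
- apply: ae_eq_integral => //.
  + apply/measurable_EFinP; apply: measurable_funM => //.
    exact: measurable_funB.
  + apply/measurable_EFinP; apply: measurable_funM => //.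
    apply: measurable_funM => //; exact: measurable_funB.
  + apply: filterS aeq => w /= -> _; congr (_%:E); rewrite /q; ring.
- transitivity (\int[P]_w ((r (X w) * (Y1 w - Y0 w))%:E
                          - (As w * (Y1 w - Y0 w))%:E))%E.
    apply: eq_integral => w _; rewrite -EFinB /Ystar /Ys1 /outcome -/As.
    by congr (_%:E); ring.
  rewrite integralB_EFin //; [|exact: iYh|exact: iYh (bdd01 As01)].
  rewrite kr kAs -integralB_EFin //; [|exact: iTh|exact: iTh].
  by apply: eq_integral => w _; rewrite -EFinB mulrBl.
- apply: ae_eq_integral => //.
  + apply/measurable_EFinP; apply: measurable_funM => //.
    exact: measurable_funB.
  + apply/measurable_EFinP; apply: measurable_funM => //.
    apply: measurable_funM => //; apply: measurable_funB => //.
  + apply: filterS aeq => w /= -> _; congr (_%:E); rewrite /q; ring.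
Qed.

End Main.


Unset Implicit Arguments.

Theorem mainTheorem3 (R : realType) (d : measure_display)
  (Omega : measurableType d) (P : probability Omega R)
  (dX : measure_display) (Xs : measurableType dX) (X : Omega -> Xs)
  (r : Xs -> R) (A S Y1 Y0 : Omega -> R) (pi pistar rhostar tau : Xs -> R) :
  measurable_fun setT X ->
  measurable_fun setT r -> (forall x, r x = 0 \/ r x = 1) ->
  measurable_fun setT A -> (forall w, A w = 0 \/ A w = 1) ->
  measurable_fun setT S -> (forall w, S w = 0 \/ S w = 1) ->
  measurable_fun setT Y1 -> measurable_fun setT Y0 ->
  P.-integrable setT (EFin \o Y1) -> P.-integrable setT (EFin \o Y0) ->
  cond_indep P X (fun w => (Y1 w, Y0 w)) A ->
  cond_indep P X (fun w => (Y1 w, Y0 w)) (Astar X r S A) ->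
  cond_indep P X A S ->
  cond_exp_version P X A pi ->
  cond_exp_version P X (Astar X r S A) pistar ->
  cond_exp_version P X S rhostar ->
  cond_exp_version P X (fun w => Y1 w - Y0 w) tau ->
  (forall x, 0 < pi x < 1) ->
  (forall x, 0 < pistar x < 1) ->
  let Ystar := outcome (Astar X r S A) Y1 Y0 in
  let Ys0 := outcome A Y1 Y0 in
  let Ys1 := outcome (fun w => r (X w)) Y1 Y0 in
  [/\ (\int[P]_w (Ystar w - Ys0 w)%:E
        = \int[P]_w ((pistar (X w) - pi (X w)) * tau (X w))%:E)%E,
      (\int[P]_w ((pistar (X w) - pi (X w)) * tau (X w))%:E
        = \int[P]_w (rhostar (X w) * (r (X w) - pi (X w)) * tau (X w))%:E)%E,
      (\int[P]_w (Ys1 w - Ystar w)%:E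
        = \int[P]_w ((r (X w) - pistar (X w)) * tau (X w))%:E)%E &
      (\int[P]_w ((r (X w) - pistar (X w)) * tau (X w))%:E
        = \int[P]_w ((1 - rhostar (X w)) * (r (X w) - pi (X w)) * tau (X w))%:E)%E].
Proof.
move=> mX mr r01 mA A01 mS S01 mY1 mY0 iY1 iY0 cIA cIAs cIAS vA vAs vS vtau pi01 ps01.
exact: (main_sec mX mY1 mY0 iY1 iY0 mr r01 mA A01 mS S01 cIA cIAs cIAS vA vAs vS vtau pi01 ps01).
Qed.
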